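(* Consider the multivariate multiple linear regression model $\mathbf{Y} = \mathbf{X}\boldsymbol{\beta}' + \boldsymbol{\mathcal{E}}$ with $K=2$ traits, where $\mathbf{Y}$ is an $n\times 2$ matrix of traits, $\mathbf{X}$ is an $n\times1$ genotype vector, $\boldsymbol{\beta}'=(\beta_1,\beta_2)$, and $\mathrm{vec}(\boldsymbol{\mathcal{E}})\sim N_{2n}(\mathbf{0},\mathbf{I}_n\otimes\boldsymbol{\Sigma})$ with $\boldsymbol{\Sigma}=\sigma^2\big((1-\rho)\mathbf{I}_2+\rho\mathbf{1}\mathbf{1}'\big)$, $\sigma^2>0$, and within-trait correlation $\rho$ (not necessarily positive) such that $\boldsymbol{\Sigma}$ is positive definite. The genetic effects need not be equal in size or in the same direction. For testing $H_0:\beta_1=\beta_2=0$ with the MANOVA test, the power when only one trait is associated (effects $(\beta_1,0)$) is asymptotically larger than the power when both traits are associated (effects $(\beta_1,\beta_2)$) if $0<\beta_2<2\rho\beta_1$ or $0>\beta_2>2\rho\beta_1$.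
   Context: $\mathbf{Y}$ and $\mathbf{X}$ are centered. The MANOVA test (Wilks' lambda, equivalent to the likelihood ratio test under the model) of $H_0:\boldsymbol{\beta}=\mathbf{0}$ uses the statistic $-n\log\big(|\mathbf{E}|/|\mathbf{H}+\mathbf{E}|\big)$, where $\hat{\boldsymbol{\beta}}=\mathbf{Y}'\mathbf{X}(\mathbf{X}'\mathbf{X})^{-1}$, $\mathbf{H}=\hat{\boldsymbol{\beta}}(\mathbf{X}'\mathbf{X})\hat{\boldsymbol{\beta}}'$ and $\mathbf{E}=\mathbf{Y}'\mathbf{Y}-\hat{\boldsymbol{\beta}}(\mathbf{X}'\mathbf{X})\hat{\boldsymbol{\beta}}'$; under $H_0$ it is approximately $\chi^2_2$ for large $n$, and the test rejects for large values. ''Asymptotically'' refers to the large-sample ($n\to\infty$) approximation of the power. *)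

(* Defs.v *)
From HB Require Import structures.
From mathcomp Require Import all_boot all_order all_algebra.
From mathcomp Require Import all_classical all_reals all_analysis.
Set Implicit Arguments. Unset Strict Implicit. Unset Printing Implicit Defensive.
Import Order.TTheory GRing.Theory Num.Theory.
Local Open Scope ring_scope.

Definition exch_cov {R : realType} (sigma2 rho : R) : 'M[R]_2 :=
  sigma2 *: ((1 - rho) *: 1%:M + rho *: const_mx 1).

Definition posdef {R : realType} (n : nat) (S : 'M[R]_n) : Prop :=
  S^T = S /\ forall v : 'cV[R]_n, v != 0 -> 0 < (v^T *m S *m v) ord0 ord0.

Definition effect2 {R : realType} (b1 b2 : R) : 'cV[R]_2 :=
  \col_(i < 2) (if i == ord0 then b1 else b2).

(* Noncentrality parameter of the asymptotic (noncentral chi^2_2) distribution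
   of the MANOVA / LRT statistic -n log(|E|/|H+E|) for centered X:
   lambda = (X'X) * beta' Sigma^{-1} beta. *)
Definition manova_noncentrality {R : realType} (n : nat) (X : 'cV[R]_n)
  (Sigma : 'M[R]_2) (beta : 'cV[R]_2) : R :=
  (X^T *m X) ord0 ord0 * (beta^T *m invmx Sigma *m beta) ord0 ord0.

(* P(chi^2_2(lambda) > c), where chi^2_2(lambda) = (Z1 + sqrt lambda)^2 + Z2^2
   with Z1, Z2 iid N(0,1). *)
Definition ncchi2_2_tail {R : realType} (lambda c : R) : \bar R :=
  ((normal_prob 0 1 \x normal_prob 0 1)%E
     [set z : R * R | c < (z.1 + Num.sqrt lambda) ^+ 2 + z.2 ^+ 2])%classic.

(* Asymptotic power of the level-alpha MANOVA test of H0 : beta = 0.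
   The chi^2_2 upper alpha-quantile is -2 ln alpha. *)
Definition manova_asymp_power {R : realType} (n : nat) (X : 'cV[R]_n)
  (Sigma : 'M[R]_2) (beta : 'cV[R]_2) (alpha : R) : \bar R :=
  ncchi2_2_tail (manova_noncentrality X Sigma beta) (- 2 * ln alpha).

(* Main.v *)
Require Import Defs.
From HB Require Import structures.
From mathcomp Require Import all_boot all_order all_algebra.
From mathcomp Require Import all_classical all_reals all_analysis.
From mathcomp Require Import ring lra measurable_realfun.
Import Order.TTheory GRing.Theory Num.Theory.
Local Open Scope ring_scope.

Section Alg.
Variable R : realType.

Lemma sum2 (f : 'I_2 -> R) : \sum_(i < 2) f i = f ord0 + f ord_max.
Proof. rewrite big_ord_recl big_ord_recl big_ord0 addr0; congr (f _ + f _); exact/val_inj. Qed.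

Lemma ord2E (i : 'I_2) : i = ord0 \/ i = ord_max.
Proof. by case: i => -[|[|//]] Hi; [left|right]; apply/val_inj. Qed.

Lemma quad2 (M : 'M[R]_2) (v : 'cV[R]_2) :
  (v^T *m M *m v) ord0 ord0 =
  v ord0 ord0 * (M ord0 ord0 * v ord0 ord0 + M ord0 ord_max * v ord_max ord0)
  + v ord_max ord0 * (M ord_max ord0 * v ord0 ord0 + M ord_max ord_max * v ord_max ord0).
Proof.
by rewrite -mulmxA !mxE sum2 !mxE !sum2.
Qed.

Lemma exch_covE (s2 rho : R) (i j : 'I_2) :
  exch_cov s2 rho i j = s2 * (if i == j then 1 else rho).
Proof.
rewrite /exch_cov !mxE; case: (i == j) => /=; ring.
Qed.

Definition Binv (s2 rho : R) : 'M[R]_2 :=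
  \matrix_(i, j) ((s2 * (1 - rho ^+ 2))^-1 * (if i == j then 1 else - rho)).

Lemma exch_inv (s2 rho : R) : 0 < s2 -> 0 < 1 - rho ^+ 2 ->
  invmx (exch_cov s2 rho) = Binv s2 rho.
Proof.
move=> s0 r0.
have hk : s2 * (1 - rho ^+ 2) != 0 by rewrite mulf_neq0 // gt_eqF.
have hk1 : s2 * (1 - rho ^+ 2) * (s2 * (1 - rho ^+ 2))^-1 = 1 by rewrite divff.
have E : exch_cov s2 rho *m Binv s2 rho = 1%:M.
  apply/matrixP => i j; rewrite [LHS]mxE sum2 !exch_covE !mxE.
  case: (ord2E i) => ->; case: (ord2E j) => -> /=; try (rewrite -[RHS]hk1); ring.
have [U _] := mulmx1_unit E.
by rewrite -[RHS]mul1mx -(mulVmx U) -mulmxA E mulmx1.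
Qed.


Lemma effect2E (b1 b2 : R) :
  effect2 b1 b2 ord0 ord0 = b1 /\ effect2 b1 b2 ord_max ord0 = b2.
Proof. by rewrite !mxE. Qed.

Lemma quad_exch (s2 rho b1 b2 : R) :
  ((effect2 b1 b2)^T *m exch_cov s2 rho *m effect2 b1 b2) ord0 ord0 =
  s2 * (b1 ^+ 2 + 2 * rho * b1 * b2 + b2 ^+ 2).
Proof.
rewrite quad2 !exch_covE; have [-> ->] := effect2E b1 b2; rewrite /=; ring.
Qed.

Lemma posdef_rho (s2 rho : R) : 0 < s2 -> posdef (exch_cov s2 rho) ->
  0 < 1 - rho ^+ 2.
Proof.
move=> s0 [_ P].
have h1 : 0 < s2 * (2 + 2 * rho).
  have := P (effect2 1 1); rewrite quad_exch.
  have -> : (1 : R) ^+ 2 + 2 * rho * 1 * 1 + 1 ^+ 2 = 2 + 2 * rho by ring.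
  apply; apply/negP => /eqP/matrixP/(_ ord0 ord0); rewrite !mxE /=.
  by move/eqP; rewrite oner_eq0.
have h2 : 0 < s2 * (2 - 2 * rho).
  have := P (effect2 1 (-1)); rewrite quad_exch.
  have -> : (1 : R) ^+ 2 + 2 * rho * 1 * -1 + (-1) ^+ 2 = 2 - 2 * rho by ring.
  apply; apply/negP => /eqP/matrixP/(_ ord0 ord0); rewrite !mxE /=.
  by move/eqP; rewrite oner_eq0.
rewrite pmulr_rgt0 // in h1; rewrite pmulr_rgt0 // in h2.
nra.
Qed.

Lemma quad_inv (s2 rho b1 b2 : R) : 0 < s2 -> 0 < 1 - rho ^+ 2 ->
  ((effect2 b1 b2)^T *m invmx (exch_cov s2 rho) *m effect2 b1 b2) ord0 ord0 =
  (b1 ^+ 2 - 2 * rho * b1 * b2 + b2 ^+ 2) / (s2 * (1 - rho ^+ 2)).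
Proof.
move=> s0 r0; rewrite exch_inv // quad2; have [-> ->] := effect2E b1 b2; rewrite !mxE.
rewrite /=; field.
by rewrite !gt_eqF.
Qed.

Lemma XtX_gt0 n (X : 'cV[R]_n) : X != 0 -> 0 < (X^T *m X) ord0 ord0.
Proof.
move=> X0; rewrite mxE.
have -> : \sum_j X^T ord0 j * X j ord0 = \sum_j (X j ord0) ^+ 2.
  by apply: eq_bigr => j _; rewrite mxE expr2.
rewrite lt_def sumr_ge0 ?andbT; last by move=> i _; rewrite sqr_ge0.
apply/negP => /eqP/psumr_eq0P H.
move/negP: X0; apply; apply/eqP/matrixP => i j.
rewrite (ord1 j) mxE; apply/eqP; rewrite -sqrf_eq0; apply/eqP/H => //.
by move=> k _; rewrite sqr_ge0.
Qed.

End Alg.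

Section Prob.
Local Open Scope classical_set_scope.
Variable R : realType.
Notation N := (normal_prob (0:R) 1).
Notation pdf := (normal_pdf (0:R) 1).

Definition Phi (x : R) : R := fine (N `]-oo, x]).

Lemma Phi_deriv x : derivable Phi x 1 /\ Phi^`() x = pdf x.
Proof.
have xx : x < x + 1 by rewrite ltrDl ltr01.
apply: (@continuous_FTC1 R pdf -oo%O x (x + 1) xx).
- apply: integrableS (integrable_normal_pdf 0 1) => //.
- by rewrite ltNyr.
- by apply: continuous_normal_pdf; rewrite oner_eq0.
Qed.


Lemma N_fin A : measurable A -> N A \is a fin_num.
Proof.
move=> mA; rewrite ge0_fin_numE ?measure_ge0 //.
exact: (le_lt_trans (probability_le1 N mA) (ltry 1)).
Qed.

Lemma NU A B : measurable A -> measurable B -> A `&` B = set0 ->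
  N (A `|` B) = (N A + N B)%E.
Proof. by move=> mA mB AB; rewrite measureU. Qed.

Lemma N_cc u v : u <= v -> N `[u, v] = (Phi v - Phi u)%:E.
Proof.
move=> uv.
have E1 : `]-oo, v] = `]-oo, u[ `|` `[u, v] :> set R.
  apply/seteqP; split => x /=; rewrite !in_itv /=.
    by move=> xv; case: (ltP x u) => xu; [left|right; rewrite xv].
  by case=> [/ltW/le_trans/(_ uv)|/andP[]].
have E2 : `]-oo, u] = `]-oo, u[ `|` [set u] :> set R.
  apply/seteqP; split => x /=; rewrite !in_itv /=.
    by rewrite le_eqVlt => /orP[/eqP->|]; [right|left].
  by case=> [/ltW|->].
have D1 : `]-oo, u[ `&` `[u, v] = set0 :> set R.
  apply/seteqP; split => x //= []; rewrite !in_itv /= => xu /andP[ux _].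
  by move: (lt_le_trans xu ux); rewrite ltxx.
have D2 : `]-oo, u[ `&` [set u] = set0 :> set R.
  apply/seteqP; split => x //= []; rewrite !in_itv /= => xu xe; by move: xu; rewrite xe ltxx.
have N1 : N [set u] = 0%E by rewrite /normal_prob integral_set1.
have H1 : N `]-oo, v] = N (`]-oo, u[ `|` `[u, v]) by congr (N _); exact: E1.
have H2 : N `]-oo, u] = N (`]-oo, u[ `|` [set u]) by congr (N _); exact: E2.
rewrite /Phi H1 H2 !NU // N1 adde0.
rewrite fineD ?N_fin // addrAC subrr add0r fineK // N_fin //.
Qed.


Lemma Phi_is_derive (x : R) : is_derive x (1:R) Phi (pdf x).
Proof.
have [d e] := Phi_deriv x.
by rewrite -e derive1E; apply: derivableP.
Qed.

Definition K (r a : R) : R := Phi (a + r) - Phi (a - r).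

Lemma K_is_derive (r x : R) : is_derive x (1:R) (K r) (pdf (x + r) - pdf (x - r)).
Proof.
have h1 : is_derive x (1:R) (Phi \o (fun a => a + r)) (pdf (x + r) * 1).
  apply: is_derive1_comp; first exact: Phi_is_derive.
  exact: is_derive_shift.
have h2 : is_derive x (1:R) (Phi \o (fun a => a - r)) (pdf (x - r) * 1).
  apply: is_derive1_comp; first exact: Phi_is_derive.
  exact: is_derive_shift.
rewrite !mulr1 in h1 h2.
exact: (is_deriveB h1 h2).
Qed.


Lemma pdfE (x : R) : pdf x = normal_peak 1 * expR (- x ^+ 2 / 2).
Proof.
rewrite /normal_pdf oner_eq0 /= /normal_fun subr0 expr1n.
by [].
Qed.

Lemma pdf_lt (x y : R) : x ^+ 2 < y ^+ 2 -> pdf y < pdf x.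
Proof.
move=> xy; rewrite !pdfE ltr_pM2l ?normal_peak_gt0 ?oner_eq0 // ltr_expR.
by rewrite ltr_pM2r ?invr_gt0 ?ltr0n // ltrN2.
Qed.

Lemma K_incr (r a b : R) : 0 < r -> a < b -> b <= 0 -> K r a < K r b.
Proof.
move=> r0 ab b0.
have der x : derivable (K r) x 1 by case: (K_is_derive r x).
apply: (@gtr0_derive1_incr _ _ a b) => //; last first.
  by apply: derivable_within_continuous => x _; exact: der.
move=> x; rewrite in_itv /= => /andP[ax xb].
have KD := K_is_derive r x; rewrite derive1E derive_val subr_gt0.
apply: pdf_lt.
have x0 : x < 0 by exact: (lt_le_trans xb b0).
nra.
Qed.


Definition C (s e : R) : set R := [set z : R | (z + s) ^+ 2 <= e].

Lemma C_itv (s e : R) : 0 <= e -> C s e = `[- s - Num.sqrt e, - s + Num.sqrt e].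
Proof.
move=> e0; have q := sqr_sqrtr e0; have q0 := sqrtr_ge0 e.
set r := Num.sqrt e in q q0 *.
apply/seteqP; split => z /=; rewrite in_itv /=.
  rewrite /C /= -q => h; apply/andP; split; nra.
move=> /andP[h1 h2]; rewrite /C /= -q; nra.
Qed.


Lemma NC_eq (s e : R) : 0 <= e -> N (C s e) = (K (Num.sqrt e) (- s))%:E.
Proof.
move=> e0.
have -> : N (C s e) = N `[- s - Num.sqrt e, - s + Num.sqrt e].
  by congr (N _); exact: C_itv.
rewrite N_cc /K //; have := sqrtr_ge0 e; lra.
Qed.

Lemma NC_neg (s e : R) : e < 0 -> N (C s e) = 0%E.
Proof.
move=> e0; have -> : N (C s e) = N set0.
  congr (N _); apply/seteqP; split => z //=; rewrite /C /= => h.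
  have := sqr_ge0 (z + s); lra.
by rewrite measure0.
Qed.

Lemma NC_le (s0 s1 e : R) : 0 <= s0 -> s0 <= s1 -> (N (C s1 e) <= N (C s0 e))%E.
Proof.
move=> s0p s01; case: (ltP e 0) => e0; first by rewrite !NC_neg.
rewrite !NC_eq // lee_fin.
have := sqrtr_ge0 e; rewrite le_eqVlt => /orP[/eqP <-|r0].
  by rewrite /K !addr0 !subr0 !subrr.
case: (ltP s0 s1) => h; last by have -> : s1 = s0 by apply/le_anti; rewrite s01 h.
by apply/ltW/K_incr => //; lra.
Qed.

Lemma NC_lt (s0 s1 e : R) : 0 <= s0 -> s0 < s1 -> 0 < e -> (N (C s1 e) < N (C s0 e))%E.
Proof.
move=> s0p s01 e0; rewrite !NC_eq ?ltW // lte_fin.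
by apply/K_incr; [rewrite sqrtr_gt0|lra|lra].
Qed.


Lemma integral_gt0 d (T : measurableType d) (mu : {measure set T -> \bar R})
  (D : set T) (f : T -> \bar R) :
  measurable D -> measurable_fun D f -> (0 < mu D)%E ->
  (forall x, D x -> 0 < f x)%E -> (0 < \int[mu]_(x in D) f x)%E.
Proof.
move=> mD mf muD fp.
have ge : (0 <= \int[mu]_(x in D) f x)%E.
  by apply: integral_ge0 => x Dx; exact/ltW/fp.
rewrite lt_def ge andbT; apply/negP => /eqP I0.
have : (\int[mu]_(x in D) `|f x| = 0)%E.
  rewrite -I0; apply: eq_integral => x; rewrite inE => Dx.
  by rewrite gee0_abs // ltW // fp.
move/(ae_eq_integral_abs mu mD mf) => [B [mB B0 sub]].
have : mu D = 0%E.
  apply: (subset_measure0 mD mB) => // x Dx; apply: sub => /= H.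
  by move: (H Dx) (fp x Dx) => ->; rewrite ltxx.
by move=> h; move: muD; rewrite h ltxx.
Qed.


Notation T := (measurableTypeR R).

Definition Aset (s c : R) : set (T * T) :=
  [set z : R * R | c < (z.1 + s) ^+ 2 + z.2 ^+ 2].

Lemma mfst : measurable_fun [set: T * T] (fun z : T * T => (z.1 : R)).
Proof. by move=> _ B mB; exact: (@measurable_fst _ _ T T measurableT B mB). Qed.

Lemma msnd : measurable_fun [set: T * T] (fun z : T * T => (z.2 : R)).
Proof. by move=> _ B mB; exact: (@measurable_snd _ _ T T measurableT B mB). Qed.

Lemma mAset (s c : R) : measurable (Aset s c).
Proof.
have m1 : measurable_fun [set: T * T] (fun z : T * T => ((z.1 : R) + s) ^+ 2).
  by apply: measurable_funX; apply: measurable_funD => //; exact: mfst.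
have m2 : measurable_fun [set: T * T] (fun z : T * T => (z.2 : R) ^+ 2).
  by apply: measurable_funX; exact: msnd.
have mf := measurable_funD m1 m2.
have := mf measurableT `]c, +oo[%classic (measurable_itv _).
rewrite setTI; congr measurable; apply/seteqP; split => z /=;
  by rewrite in_itv /= andbT.
Qed.


Lemma swapP (X : set (T * T)) : measurable X -> (N \x N)%E X = (N \x^ N)%E X.
Proof.
apply: product_measure_unique => A B mA mB.
exact: product_measure2E.
Qed.

Lemma P_fin d' (U : measurableType d') (P : probability U R) A :
  measurable A -> P A \is a fin_num.
Proof.
move=> mA; rewrite ge0_fin_numE ?measure_ge0 //.
exact: (le_lt_trans (probability_le1 P mA) (ltry 1)).
Qed.

Lemma compl_A (s c : R) : (N \x^ N)%E (Aset s c) = (1 - (N \x^ N)%E (~` Aset s c))%E.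
Proof.
rewrite (probability_setC (N \x^ N)%E); last exact: mAset.
have f := @P_fin _ _ (N \x^ N)%E _ (mAset s c).
rewrite -(fineK f) -!EFinB.
set y := fine _.
have e : (1 - (1 - y) = y)%R by ring.
by rewrite e /y fineK.
Qed.


Lemma ysecC (s c : R) (y : T) :
  ysection (~` Aset s c) y = C s (c - (y : R) ^+ 2).
Proof.
apply/seteqP; split => x; rewrite /ysection /C /= inE /=.
  by move/negP; rewrite -leNgt lerBrDr.
by rewrite lerBrDr leNgt => /negP.
Qed.

Lemma prodC (s c : R) : (N \x^ N)%E (~` Aset s c) =
  (\int[N]_y N (C s (c - (y : R) ^+ 2)))%E.
Proof.
rewrite /product_measure2; apply: eq_integral => y _ /=.
by rewrite ysecC.
Qed.


Lemma N_itv_pos (a : R) : 0 < a -> (0 < N `](- a)%R, a[)%E.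
Proof.
move=> a0; rewrite /normal_prob.
apply: integral_gt0 => //.
- apply/measurable_EFinP; apply: measurable_funTS.
  exact: measurable_normal_pdf.
- suff h : (0 < (@lebesgue_measure R) `](- a)%R, a[)%E by exact: h.
  rewrite lebesgue_measure_itv /= lte_fin.
  have -> : (- a < a) = true by apply/idP; lra.
  by rewrite /= -EFinB lte_fin; lra.
- move=> x _; rewrite lte_fin pdfE mulr_gt0 ?expR_gt0 //.
  by rewrite normal_peak_gt0 // oner_eq0.
Qed.


Lemma mg (s c : R) : measurable_fun [set: T] (fun y : T => N (C s (c - (y : R) ^+ 2))).
Proof.
have := measurable_fun_ysection N (measurableC (mAset s c)).
congr measurable_fun; apply/funext => y /=.
by rewrite ysecC.
Qed.

Lemma main_mono (s0 s1 c : R) : 0 < c -> 0 <= s0 -> s0 < s1 ->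
  (\int[N]_y N (C s1 (c - (y : R) ^+ 2)) < \int[N]_y N (C s0 (c - (y : R) ^+ 2)))%E.
Proof.
move=> c0 s0p s01.
set g0 := fun y : T => N (C s0 (c - (y : R) ^+ 2)).
set g1 := fun y : T => N (C s1 (c - (y : R) ^+ 2)).
set h := fun y : T => (g0 y - g1 y)%E.
have mC s y : @measurable _ T (C s (c - (y : R) ^+ 2)).
  have := measurable_ysection (y : T) (measurableC (mAset s c)).
  by rewrite ysecC.
have g1fin y : g1 y \is a fin_num by apply: P_fin.
have g0fin y : g0 y \is a fin_num by apply: P_fin.
have E : (\int[N]_y g0 y = \int[N]_y g1 y + \int[N]_y h y)%E.
  rewrite -ge0_integralD //.
  - by apply: eq_integral => y _; rewrite /h addeC subeK.
  - exact: mg.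
  - move=> y _; rewrite /h sube_ge0; last by apply/orP; left; move: (g1fin y); rewrite fin_numE.
    by rewrite /g0 /g1; apply: NC_le => //; exact: ltW.
  - exact: (emeasurable_funB (mg s0 c) (mg s1 c)).
rewrite E lteDl; last first.
  rewrite ge0_fin_numE; last by apply: integral_ge0.
  apply: (@le_lt_trans _ _ (\int[N]_y (cst 1%E y))%E).
    apply: ge0_le_integral => //.
    - exact: mg.
    - by move=> y _; apply: probability_le1.
  by rewrite integral_cst //= mul1e probability_setT ltry.
have sq := sqrtr_gt0 c; rewrite c0 in sq.
apply: (@lt_le_trans _ _ (\int[N]_(y in `](- Num.sqrt c)%R, Num.sqrt c[) h y)%E).
  apply: integral_gt0 => //.
  - apply: measurable_funTS; exact: (emeasurable_funB (mg s0 c) (mg s1 c)).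
  - exact: N_itv_pos.
  - move=> y; rewrite /= in_itv /= => /andP[y1 y2].
    rewrite /h sube_gt0; apply: NC_lt => //.
    have := sqr_sqrtr (ltW c0); nra.
apply: ge0_subset_integral => //.
- exact: (emeasurable_funB (mg s0 c) (mg s1 c)).
- move=> y _; rewrite /h sube_ge0; last by apply/orP; left; move: (g1fin y); rewrite fin_numE.
  by rewrite /g0 /g1; apply: NC_le => //; exact: ltW.
Qed.


Lemma tailE (s c : R) : (N \x N)%E (Aset s c) =
  (1 - \int[N]_y N (C s (c - (y : R) ^+ 2)))%E.
Proof.
rewrite swapP; last exact: mAset.
rewrite -prodC; exact: compl_A.
Qed.

Lemma tail_mono (l0 l1 c : R) : 0 < c -> 0 <= l0 -> l0 < l1 ->
  (ncchi2_2_tail l0 c < ncchi2_2_tail l1 c)%E.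
Proof.
move=> c0 l0p l01.
have s0p : 0 <= Num.sqrt l0 by exact: sqrtr_ge0.
have s01 : Num.sqrt l0 < Num.sqrt l1 by rewrite ltr_sqrt //; lra.
change ((N \x N)%E (Aset (Num.sqrt l0) c) < (N \x N)%E (Aset (Num.sqrt l1) c))%E.
rewrite !tailE.
have H := @main_mono _ _ c c0 s0p s01.
have F s : (\int[N]_y N (C s (c - (y : R) ^+ 2)))%E \is a fin_num.
  rewrite -prodC; apply: P_fin; apply: measurableC; exact: mAset.
have F0 := F (Num.sqrt l0); have F1 := F (Num.sqrt l1).
move: F0 F1 H.
set a := (\int[N]_y N (C (Num.sqrt l0) (c - (y:R)^+2)))%E.
set b := (\int[N]_y N (C (Num.sqrt l1) (c - (y:R)^+2)))%E.
move: a b => [a| |] [b| |] //= _ _.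
rewrite !lte_fin => H; lra.
Qed.

End Prob.
Theorem theorem2 (R : realType) (n : nat) (X : 'cV[R]_n)
  (sigma2 rho b1 b2 alpha : R) :
  0 < sigma2 ->
  posdef (exch_cov sigma2 rho) ->
  \sum_(i < n) X i ord0 = 0 ->
  X != 0 ->
  0 < alpha < 1 ->
  (0 < b2 < 2 * rho * b1 \/ 2 * rho * b1 < b2 < 0) ->
  (manova_asymp_power X (exch_cov sigma2 rho) (effect2 b1 b2) alpha
   < manova_asymp_power X (exch_cov sigma2 rho) (effect2 b1 0) alpha)%E.
Proof.
move=> s0 pd _ X0 a01 hb.
have r0 := @posdef_rho _ _ _ s0 pd.
have xx := @XtX_gt0 _ _ _ X0.
rewrite /manova_asymp_power /manova_noncentrality !quad_inv //.
have lna : ln alpha < 0 by apply: ln_lt0.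
set XX := (X^T *m X) ord0 ord0 in xx *.
set D := sigma2 * (1 - rho ^+ 2).
have D0 : 0 < D by rewrite /D mulr_gt0.
apply: tail_mono.
- by rewrite mulNr oppr_gt0 pmulr_rlt0.
- apply: mulr_ge0; first exact: ltW.
  apply: divr_ge0; last exact: ltW.
  have := sqr_ge0 (b1 - rho * b2); have := mulr_ge0 (ltW r0) (sqr_ge0 b2); nra.
- rewrite ltr_pM2l // ltr_pM2r ?invr_gt0 //.
  case: hb => /andP[h1 h2]; nra.
Qed.
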